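(* Let $p$ be a binary word of length $l$ whose maximum run size is $i$. Then $p$ does not have an internal zero at $l+1$ if and only if for every $j\in\{1,\dots,i\}$, $p$ has a run of size $j$.
   Context: $c_p(w)$ is the number of occurrences of $p$ as a (not necessarily consecutive) subsequence of $w$; $B_{n,p}(k)$ is the number of binary words of length $n$ with $c_p(w)=k$. A run is a maximal block of consecutive equal letters; its size is its length. $p$ has an internal zero at $n$ if there exist $0\le k_1<k_2<k_3$ with $B_{n,p}(k_1)\ne0$, $B_{n,p}(k_2)=0$, $B_{n,p}(k_3)\ne0$. *)

(* Defs.v *)
From mathcomp Require Import all_boot.
Set Implicit Arguments. Unset Strict Implicit. Unset Printing Implicit Defensive.

(* c_p(w): number of occurrences of p as a (not necessarily consecutive)
   subsequence of w, i.e. the number of index subsets of w (encoded as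
   masks of length |w|) selecting exactly the word p. *)
Definition occ (p w : seq bool) : nat :=
  #|[set m : (size w).-tuple bool | mask m w == p]|.

Definition B (n : nat) (p : seq bool) (k : nat) : nat :=
  #|[set w : n.-tuple bool | occ p w == k]|.

Definition internal_zero (p : seq bool) (n : nat) : Prop :=
  exists k1 k2 k3, [/\ k1 < k2 < k3, B n p k1 != 0, B n p k2 = 0 & B n p k3 != 0].

Definition has_run (w : seq bool) (j : nat) : Prop :=
  exists a b, [/\ 0 < j, a + j <= size w,
    (forall t, t < j -> nth false w (a + t) = b),
    (0 < a -> nth false w a.-1 != b) &
    (a + j < size w -> nth false w (a + j) != b)].

Definition max_run (w : seq bool) (i : nat) : Prop :=
  has_run w i /\ (forall j, has_run w j -> j <= i).

(* Main.v *)
Require Import Defs.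
From mathcomp Require Import all_boot zify.

Fixpoint masks n : seq (seq bool) :=
  if n is n'.+1 then [seq true :: m | m <- masks n'] ++ [seq false :: m | m <- masks n']
  else [:: [::]].

Lemma cons_inj (b : bool) : injective (cons b).
Proof. by move=> x y [].  Qed.

Lemma mem_masks n s : (s \in masks n) = (size s == n).
Proof.
elim: n s => [|n IH] [|b s] //=.
  by rewrite mem_cat; apply/negbTE; rewrite negb_or; apply/andP; split; apply/mapP => [[m _]].
rewrite mem_cat; case: b.
- rewrite (mem_map (@cons_inj true)) IH.
  have -> : (true :: s \in [seq false :: m | m <- masks n]) = false.
    by apply/negbTE/mapP => [[m _]].
  by rewrite orbF.
- rewrite (mem_map (@cons_inj false)) IH.
  have -> : (false :: s \in [seq true :: m | m <- masks n]) = false.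
    by apply/negbTE/mapP => [[m _]].
  by [].
Qed.

Lemma uniq_masks n : uniq (masks n).
Proof.
elim: n => [|n IH] //=.
rewrite cat_uniq !(map_inj_uniq (@cons_inj _)) IH /= andbT.
by apply/hasPn => x /mapP [m _ ->]; apply/mapP => [[m' _]].
Qed.

Lemma card_masks n (P : pred (seq bool)) :
  #|[set m : n.-tuple bool | P m]| = count P (masks n).
Proof.
rewrite cardsE cardE /enum_mem size_filter.
rewrite -(count_map val P).
apply/permP/uniq_perm.
- rewrite map_inj_uniq; last exact: val_inj.
  by rewrite -enumT enum_uniq.
- exact: uniq_masks.
move=> s; rewrite -enumT mem_masks; apply/mapP/idP.
- by move=> [t _ ->]; rewrite size_tuple.
- move=> Hs; exists (Tuple Hs) => //; by rewrite mem_enum.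
Qed.

Fixpoint cnt (p w : seq bool) : nat :=
  match w with
  | [::] => nat_of_bool (p == [::])
  | y :: w' => cnt p w' + (if p is x :: p' then (x == y) * cnt p' w' else 0)
  end.

Lemma occ_cnt p w : occ p w = cnt p w.
Proof.
rewrite /occ (card_masks _ (fun m => mask m w == p)).
elim: w p => [|y w IH] p; first by rewrite /= addn0 eq_sym.
rewrite [size _]/= [masks _]/=.
rewrite count_cat !count_map.
have -> : count (preim (cons false) (fun m => mask m (y :: w) == p)) (masks (size w))
   = cnt p w by rewrite -IH.
rewrite [cnt p (y :: w)]/= addnC.
congr (_ + _).
case: p => [|x p'].
- by rewrite (@eq_count _ _ pred0) ?count_pred0.
- rewrite /preim /=.
  case: (eqVneq y x) => [->|ne].
    by rewrite mul1n -IH; apply: eq_count => m /=; rewrite eqseq_cons eqxx.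
  rewrite mul0n.
  by rewrite (@eq_count _ _ pred0) ?count_pred0 // => m /=; rewrite eqseq_cons (negbTE ne).
Qed.

Lemma cnt_small p w : size w < size p -> cnt p w = 0.
Proof.
elim: w p => [|y w IH] [|x p] //= H.
by rewrite !IH ?muln0 //; apply: ltnW.
Qed.

Lemma cnt_eq p w : size w = size p -> cnt p w = (w == p).
Proof.
elim: w p => [|y w IH] [|x p] //= [H].
rewrite cnt_small ?H // IH // eqseq_cons eq_sym.
by rewrite add0n mulnb.
Qed.

Definition del (d : nat) (w : seq bool) := take d w ++ drop d.+1 w.
Definition dc (p w : seq bool) := count (fun d => del d w == p) (iota 0 (size w)).

Lemma del0 y w : del 0 (y :: w) = w.
Proof. by rewrite /del /= drop0. Qed.
Lemma delS d y w : del d.+1 (y :: w) = y :: del d w.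
Proof. by []. Qed.

Lemma cnt_dc p w : size w = (size p).+1 -> cnt p w = dc p w.
Proof.
rewrite /dc; elim: w p => [|y w IH] p //= [H].
rewrite cnt_eq // del0 (iotaDl 1 0) count_map.
congr (_ + _).
case: p H => [|x p] /= H.
  by move/eqP: H; rewrite size_eq0 => /eqP ->.
rewrite IH //.
case: (eqVneq x y) => [->|ne].
  by rewrite mul1n; apply: eq_count => d /=; rewrite add1n delS eqseq_cons eqxx.
rewrite mul0n (@eq_count _ _ pred0) ?count_pred0 // => d /=.
by rewrite add1n delS eqseq_cons eq_sym (negbTE ne).
Qed.

Lemma del_cat u d s : del (size u + d) (u ++ s) = u ++ del d s.
Proof. by elim: u => //= x u IH; rewrite addSn delS IH. Qed.

Lemma del_mid s x t : del (size s) (s ++ x :: t) = s ++ t.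
Proof. by rewrite -[size s]addn0 del_cat del0. Qed.

Lemma nth_del d w t : d < size w ->
  nth false (del d w) t = nth false w (if t < d then t else t.+1).
Proof.
move=> H; rewrite /del nth_cat size_take H.
case: ifP => td; first by rewrite nth_take.
rewrite nth_drop; congr nth; lia.
Qed.

Lemma step d e w t : d < e -> e < size w -> del d w = del e w -> d <= t < e ->
  nth false w t = nth false w t.+1.
Proof.
move=> de es E /andP [dt te].
have := congr1 (fun s => nth false s t) E.
rewrite /= !nth_del //; last by apply: ltn_trans es.
by rewrite te ltnNge dt /=.
Qed.

Definition condu (u : seq bool) b := 0 < size u -> nth false u (size u).-1 != b.
Definition condv (v : seq bool) b := 0 < size v -> nth false v 0 != b.

Lemma decomp w d : d < size w -> exists u m b v,
  [/\ w = u ++ nseq m b ++ v, 0 < m, size u <= d < size u + m, condu u b & condv v b].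
Proof.
elim: w d => [|y w IH] d //=.
case: w IH => [|z w'] IH Hd.
  exists [::], 1, y, [::]; split => //; lia.
have /IH [u [m [b [v [E m0 Hud cu cv]]]]] : d.-1 < size (z :: w') by simpl in *; lia.
rewrite E; clear IH E.
case: (eqVneq u [::]) => [u0|un].
  subst u.
  case: (eqVneq b y) => [by_|bny].
    subst b. exists [::], m.+1, y, v; split => //; try (simpl in *; lia).
  case: d Hd Hud => [|d] Hd Hud.
    exists [::], 1, y, (nseq m b ++ v); split => //.
    by rewrite /condv => _; case: m m0 {Hud} => // m _ /=; rewrite eq_sym.
  exists [:: y], m, b, v; split => //=; try lia.
  by rewrite /condu /= => _; rewrite eq_sym.
case: d Hd Hud => [|d] Hd Hud.
  by move: Hud; case: u un {cu} => //= ? ?; lia.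
exists (y :: u), m, b, v; split => //=; try (simpl in *; lia).
rewrite /condu /= => _.
case: u un cu {Hud} => //= a u _ cu.
by apply: cu.
Qed.

Lemma nth_mid u m b v t : size u <= t < size u + m ->
  nth false (u ++ nseq m b ++ v) t = b.
Proof.
move=> /andP [h1 h2]; rewrite nth_cat ltnNge h1 /= nth_cat size_nseq.
have -> : t - size u < m by lia.
by rewrite nth_nseq; case: ifP => //; lia.
Qed.

Lemma nth_left u s t : t < size u -> nth false (u ++ s) t = nth false u t.
Proof. by move=> h; rewrite nth_cat h. Qed.

Lemma nth_right u m b v k :
  nth false (u ++ nseq m b ++ v) (size u + m + k) = nth false v k.
Proof.
rewrite nth_cat.
have -> : size u + m + k < size u = false by lia.
rewrite nth_cat size_nseq.
have -> : size u + m + k - size u < m = false by lia.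
congr nth; lia.
Qed.

Lemma delmid u m b v k : k < m ->
  del (size u + k) (u ++ nseq m b ++ v) = u ++ nseq m.-1 b ++ v.
Proof.
move=> km.
have -> : nseq m b = nseq k b ++ b :: nseq (m - k.+1) b.
  by rewrite -[b :: _]/(nseq (m - k.+1).+1 b) -nseqD; congr nseq; lia.
rewrite del_cat -catA /= -[k in del k _](size_nseq k b) del_mid (catA (nseq k b)) -nseqD.
congr (_ ++ nseq _ _ ++ _); lia.
Qed.

Lemma dc_run u m b v : 0 < m -> condu u b -> condv v b ->
  dc (u ++ nseq m.-1 b ++ v) (u ++ nseq m b ++ v) = m.
Proof.
move=> m0 cu cv; rewrite /dc.
set w := u ++ nseq m b ++ v.
have sw : size w = size u + m + size v by rewrite /w !size_cat size_nseq addnA.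
have hp : del (size u) w = u ++ nseq m.-1 b ++ v by rewrite -[size u]addn0 delmid.
rewrite sw !iotaD !count_cat add0n.
rewrite (@eq_in_count _ _ pred0 (iota 0 (size u))); last first.
  move=> d; rewrite mem_iota /= => hd; apply/negbTE/eqP => E.
  rewrite -hp in E.
  have := @step d (size u) w (size u).-1.
  rewrite sw E; move/(_ ltac:(lia) ltac:(lia) erefl ltac:(lia)).
  rewrite nth_left; last lia.
  have -> : (size u).-1.+1 = size u by lia.
  rewrite (@nth_mid u m b v); last lia.
  by move/eqP; apply/negP; apply: cu; lia.
rewrite (@eq_in_count _ _ predT (iota (size u) m)); last first.
  move=> d; rewrite mem_iota => hd /=; apply/eqP.
  have -> : d = size u + (d - size u) by lia.
  by rewrite delmid //; lia.
rewrite (@eq_in_count _ _ pred0 (iota (size u + m) (size v))); last first.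
  move=> d; rewrite mem_iota /= => hd; apply/negbTE/eqP => E.
  rewrite -hp in E.
  have := @step (size u) d w (size u + m).-1.
  rewrite sw -E; move/(_ ltac:(lia) ltac:(lia) erefl ltac:(lia)).
  rewrite (@nth_mid u m b v); last lia.
  have -> : (size u + m).-1.+1 = size u + m + 0 by lia.
  rewrite nth_right => /eqP; rewrite eq_sym; apply/negP; apply: cv; lia.
by rewrite !count_pred0 count_predT size_iota add0n addn0.
Qed.

Definition runD (p : seq bool) j := exists u b v,
  [/\ p = u ++ nseq j b ++ v, 0 < j, condu u b & condv v b].

Lemma runD_has p j : runD p j -> has_run p j.
Proof.
move=> [u [b [v [E j0 cu cv]]]].
have sp : size p = size u + j + size v by rewrite E !size_cat size_nseq addnA.
exists (size u), b; split => //.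
- lia.
- by move=> t tj; rewrite E nth_mid //; lia.
- move=> u0; rewrite E nth_left; last lia.
  by apply: cu.
- move=> hs; rewrite E -[size u + j]addn0 nth_right; apply: cv; lia.
Qed.

Lemma has_runD p j : has_run p j -> runD p j.
Proof.
move=> [a [b [j0 hs hm hl hr]]].
exists (take a p), b, (drop (a + j) p).
have st : size (take a p) = a by rewrite size_take; case: ifP => //; lia.
split => //.
- have -> : nseq j b = take j (drop a p).
    apply: (@eq_from_nth _ false); first by rewrite size_nseq size_take size_drop; case: ifP => //; lia.
    move=> t; rewrite size_nseq => tj.
    by rewrite nth_nseq tj nth_take // nth_drop hm.
  by rewrite (addnC a j) -drop_drop !cat_take_drop.
- rewrite /condu st => a0; rewrite nth_take; last lia.
  exact: hl.
- rewrite /condv size_drop => h; rewrite nth_drop addn0; apply: hr; lia.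
Qed.

Lemma dcA p w : size w = (size p).+1 -> 1 < dc p w -> runD p (dc p w).-1.
Proof.
move=> sw h.
have : has (fun d => del d w == p) (iota 0 (size w)) by rewrite has_count; apply: ltnW h.
move/hasP => [d]; rewrite mem_iota add0n => /andP [_ hd] /eqP E.
have [u [m [b [v [Ew m0 hu cu cv]]]]] := decomp _ _ hd.
have Ep : p = u ++ nseq m.-1 b ++ v.
  rewrite -E Ew; have -> : d = size u + (d - size u) by lia.
  by rewrite delmid //; lia.
have Hdc : dc p w = m by rewrite Ep Ew dc_run.
rewrite Hdc; exists u, b, v; split => //; lia.
Qed.

Lemma dcD p j : runD p j -> exists w, size w = (size p).+1 /\ dc p w = j.+1.
Proof.
move=> [u [b [v [E j0 cu cv]]]].
exists (u ++ nseq j.+1 b ++ v); split.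
  by rewrite E !size_cat !size_nseq; lia.
by rewrite E -[j in nseq j b]/(j.+1.-1) dc_run.
Qed.

Lemma dc1 p : 0 < size p -> exists w, size w = (size p).+1 /\ dc p w = 1.
Proof.
case: p => [|x p] // _.
exists (~~ x :: x :: p); split => //.
have := @dc_run [::] 1 (~~ x) (x :: p) erefl.
rewrite /= => ->//.
by rewrite /condv /= => _; case: x.
Qed.

Lemma dc0 p : 0 < size p -> exists w, size w = (size p).+1 /\ dc p w = 0.
Proof.
case: p => [|x p] // _.
exists (nseq (size p).+2 (~~ x)); split; first by rewrite size_nseq.
rewrite /dc (@eq_in_count _ _ pred0) ?count_pred0 // => d.
rewrite mem_iota size_nseq /= => hd; apply/negbTE/eqP.
have := @delmid [::] (size p).+2 (~~ x) [::] d.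
rewrite /= cats0 => ->; last lia.
by move=> [] /eqP; case: x.
Qed.

Lemma Bne0 p k : B (size p).+1 p k != 0 <->
  exists w, size w = (size p).+1 /\ dc p w = k.
Proof.
rewrite /B cards_eq0; split.
  move/set0Pn => [t]; rewrite inE => /eqP H; exists t; split; first exact: size_tuple.
  by rewrite -cnt_dc ?size_tuple // -occ_cnt.
move=> [w [Hs Ho]]; have Hs' : size w == (size p).+1 by apply/eqP.
apply/set0Pn; exists (Tuple Hs'); rewrite inE /=.
by rewrite occ_cnt cnt_dc // Ho.
Qed.

Theorem mainTheorem12 (p : seq bool) (l i : nat) :
  size p = l -> max_run p i ->
  (~ internal_zero p l.+1 <-> (forall j, 1 <= j <= i -> has_run p j)).
Proof.
move=> Hl [Hi Hmax]; subst l.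
have [i0 ip] : 0 < i /\ i <= size p.
  by case: Hi => a [b [? ? _ _ _]]; split => //; lia.
have p0 : 0 < size p by lia.
have Ebound : forall w, size w = (size p).+1 -> dc p w <= i.+1.
  move=> w Hs; case: (leqP (dc p w) 1) => h; first lia.
  have := Hmax _ (runD_has _ _ (dcA _ _ Hs h)); lia.
split.
- move=> NIZ j /andP [j1 ji].
  case: (eqVneq j i) => [->|jni]; first exact: Hi.
  case E: (B (size p).+1 p j.+1 == 0).
    exfalso; apply: NIZ; exists 0, j.+1, i.+1; split.
    + by apply/andP; split => //; rewrite ltnS ltn_neqAle jni ji.
    + by apply/Bne0; apply: dc0.
    + exact/eqP.
    + by apply/Bne0; apply: dcD; apply: has_runD.
  have : B (size p).+1 p j.+1 != 0 by rewrite E.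
  move/Bne0 => [w [Hs Hd]].
  have := dcA _ _ Hs (ltac:(rewrite Hd; lia)).
  by rewrite Hd => /runD_has.
- move=> H [k1 [k2 [k3 [/andP [h12 h23] _ B2 B3]]]].
  move/Bne0: B3 => [w [Hs Hd]].
  have := Ebound w Hs; rewrite Hd => hk3.
  case: k2 h12 h23 B2 => [|k2] h12 h23 B2; first lia.
  case: (eqVneq k2 0) => [k0|kn].
    subst k2; have : B (size p).+1 p 1 != 0 by apply/Bne0; apply: dc1.
    by rewrite B2.
  have : B (size p).+1 p k2.+1 != 0.
    apply/Bne0; apply: dcD; apply: has_runD; apply: H; lia.
  by rewrite B2.
Qed.
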